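(* Let $m\ge 3$ be odd, $n\ge2$, and let $\mathcal{A}=(a_{i_1\dots i_m})$ be a real symmetric $m$th order $n$-dimensional tensor which is strongly positive semi-definite. Then $a_{i_1\dots i_m}\ge 0$ whenever at least $m-1$ of the indices $i_1,\dots,i_m$ are equal. If furthermore $\mathcal{A}$ is strongly positive definite, then $a_{i_1\dots i_m}>0$ whenever at least $m-1$ of the indices $i_1,\dots,i_m$ are equal.
   Context: For $\mathbf{x}\in\mathbb{R}^n$, $\mathcal{A}\mathbf{x}^{m-1}$ is the vector with $i$th component $\sum_{i_2,\dots,i_m=1}^n a_{ii_2\dots i_m}x_{i_2}\cdots x_{i_m}$. For odd $m$ and symmetric $\mathcal{A}$, $\mathcal{A}$ is strongly positive semi-definite if $\mathcal{A}\mathbf{x}^{m-1}\ge\mathbf{0}$ componentwise for all $\mathbf{x}\in\mathbb{R}^n$, and strongly positive definite if $\mathcal{A}\mathbf{x}^{m-1}>\mathbf{0}$ componentwise for all nonzero $\mathbf{x}\in\mathbb{R}^n$. *)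

(* Defs.v *)
From mathcomp Require Import all_boot all_order all_algebra all_fingroup.
Set Implicit Arguments. Unset Strict Implicit. Unset Printing Implicit Defensive.
Import Order.TTheory GRing.Theory Num.Theory.
Local Open Scope ring_scope.

Definition tensor (R : Type) (m n : nat) := m.-tuple 'I_n -> R.

Definition symmetric_tensor (R : Type) (m n : nat) (A : tensor R m n) : Prop :=
  forall (s : 'S_m) (t : m.-tuple 'I_n),
    A [tuple tnth t (s k) | k < m] = A t.

(* (A x^{m-1})_i = sum_{i_2..i_m} a_{i i_2 .. i_m} x_{i_2} ... x_{i_m}  (for m >= 1) *)
Definition tensor_apply (R : nzRingType) (m n : nat)
    (A : tensor R m.+1 n) (x : 'I_n -> R) (i : 'I_n) : R :=
  \sum_(t : m.-tuple 'I_n) A [tuple of i :: t] * \prod_(k < m) x (tnth t k).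

Definition strongly_psd (R : numDomainType) (m n : nat) (A : tensor R m.+1 n) : Prop :=
  forall x : 'I_n -> R, forall i : 'I_n, 0 <= tensor_apply A x i.

Definition strongly_pd (R : numDomainType) (m n : nat) (A : tensor R m.+1 n) : Prop :=
  forall x : 'I_n -> R, (exists j, x j != 0) -> forall i : 'I_n, 0 < tensor_apply A x i.

Definition at_least_equal (m n : nat) (p : nat) (t : m.-tuple 'I_n) : Prop :=
  exists j : 'I_n, (p <= #|[set k : 'I_m | tnth t k == j]|)%N.

(* Main.v *)
Require Import Defs.
From mathcomp Require Import all_boot all_order all_algebra all_fingroup.
From mathcomp Require Import zify.
Import Order.TTheory GRing.Theory Num.Theory.
Local Open Scope ring_scope.

Lemma apply_delta (R : numDomainType) (k n : nat) (A : tensor R k.+1 n) (j l : 'I_n) :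
  tensor_apply A (fun i => (i == j)%:R) l = A [tuple of l :: nseq_tuple k j].
Proof.
rewrite /tensor_apply (bigD1 (nseq_tuple k j)) //= [X in _ + X]big1 ?addr0.
  rewrite big1 ?mulr1 // => i _; by rewrite tnth_nseq eqxx.
move=> t Ht.
have [q Hq] : exists q, tnth t q != j.
  apply/existsP; apply: contraR Ht; rewrite negb_exists => /forallP H.
  apply/eqP; apply: eq_from_tnth => q; rewrite tnth_nseq; apply/eqP.
  by have := H q; rewrite negbK.
by rewrite (bigD1 q) //= (negbTE Hq) mul0r mulr0.
Qed.

Lemma reduce_form (R : Type) (k n : nat) (A : tensor R k.+1 n)
  (Hsym : symmetric_tensor A) (t : k.+1.-tuple 'I_n) :
  at_least_equal k t -> exists l j, A t = A [tuple of l :: nseq_tuple k j].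
Proof.
move=> [j Hj].
set S := [set q : 'I_k.+1 | tnth t q == j] in Hj.
have HC : (#|~: S| <= 1)%N.
  have := cardsC S; rewrite card_ord => HS; move: Hj; lia.
have [p Hp] : exists p, forall q, q != p -> tnth t q == j.
  case: (pickP (mem (~: S))) => [p Hp|H0].
    exists p => q Hqp; move/card_le1P: HC => /(_ p Hp q) E.
    move: E; rewrite !inE (negbTE Hqp) => /negbFE; rewrite ?inE; exact.
  exists ord0 => q _; have := H0 q; by rewrite !inE => /negbFE.
exists (tnth t p), j.
rewrite -(Hsym (tperm ord0 p) t); congr (A _).
apply: eq_from_tnth => q; rewrite tnth_mktuple [in RHS](tnth_nth (tnth t p)) /=.
case: q => [[|q'] Hq] /=.
  have -> : Ordinal Hq = ord0 by apply: val_inj.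
  by rewrite tpermL.
rewrite nth_nseq (_ : (q' < k)%N) //; apply/eqP/Hp.
apply/eqP => E.
have : tperm ord0 p (Ordinal Hq) = tperm ord0 p ord0 by rewrite tpermL.
by move/perm_inj/(congr1 val).
Qed.

(* The paper's order m is written here as k.+1 (so k = m - 1). *)
Theorem proposition3p2 (R : realFieldType) (k n : nat)
    (Hm_odd : odd k.+1) (Hm3 : (3 <= k.+1)%N) (Hn : (2 <= n)%N)
    (A : tensor R k.+1 n) (Hsym : symmetric_tensor A) :
  (strongly_psd A ->
     forall t : k.+1.-tuple 'I_n, at_least_equal k t -> 0 <= A t)
  /\
  (strongly_pd A ->
     forall t : k.+1.-tuple 'I_n, at_least_equal k t -> 0 < A t).
Proof.
split=> H t /(@reduce_form _ _ _ _ Hsym) [l [j ->]]; rewrite -apply_delta.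
  exact: H.
apply: H; exists j; by rewrite eqxx oner_neq0.
Qed.
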